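(* Let $\mu,\nu$ be finite measures on $\mathbb R$ with finite first moments such that $\mu\le_E\nu$. Define $\beta=(\nu(\mathbb R)-\mu(\mathbb R))\,\delta_{\frac{\overline\nu-\overline\mu}{\nu(\mathbb R)-\mu(\mathbb R)}}$ (with $\beta$ the zero measure if $\nu(\mathbb R)=\mu(\mathbb R)$). Then $\nu-\mu\ge_{cx}\beta$, i.e. $\int f\,d\beta\le\int f\,d\nu-\int f\,d\mu$ for every convex $f:\mathbb R\to\mathbb R$. Consequently $P_\nu-P_\mu\ge P_\beta$, where $P_\beta(k)=\big((\nu(\mathbb R)-\mu(\mathbb R))k-(\overline\nu-\overline\mu)\big)^+$.
   Context: For a finite measure $\eta$ on $\mathbb R$ with finite first moment, $\overline\eta=\int x\,\eta(dx)$ and $P_\eta(k)=\int(k-x)^+\eta(dx)$. $\mu\le_E\nu$ means $\int f\,d\mu\le\int f\,d\nu$ for all non-negative convex $f:\mathbb R\to\mathbb R_+$. The convex order $\le_{cx}$ means comparison of integrals of all convex functions. *)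

(* Defs.v *)
From HB Require Import structures.
From mathcomp Require Import all_boot all_order all_algebra.
From mathcomp Require Import all_classical all_reals all_analysis.
Set Implicit Arguments. Unset Strict Implicit. Unset Printing Implicit Defensive.
Import Order.TTheory GRing.Theory Num.Theory.
Local Open Scope classical_set_scope.
Local Open Scope ring_scope.

Definition mass (R : realType) (eta : {measure set R -> \bar R}) : R :=
  fine (eta setT).

Definition moment1 (R : realType) (eta : {measure set R -> \bar R}) : R :=
  fine (\int[eta]_x (x%:E))%E.

Definition Pput (R : realType) (eta : {measure set R -> \bar R}) (k : R)
  : \bar R := (\int[eta]_x (Num.max (k - x) 0)%:E)%E.

Definition convexR (R : realType) (f : R -> R) : Prop :=
  convex_function (E := R^o) setT f.

Definition le_E (R : realType) (mu nu : {measure set R -> \bar R}) : Prop :=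
  forall f : R -> R, convexR f -> (forall x, 0 <= f x) ->
    (\int[mu]_x (f x)%:E <= \int[nu]_x (f x)%:E)%E.

(* the mass difference, clipped at 0 only to build a measure; under mu <=_E nu
   it is nonnegative, so the clipping is inactive *)
Lemma max0_ge0 (R : realType) (x : R) : 0 <= Num.max 0 x.
Proof. by rewrite le_max lexx. Qed.

Definition beta_mass (R : realType) (mu nu : {measure set R -> \bar R})
  : {nonneg R} := NngNum (max0_ge0 (mass nu - mass mu)).

Definition beta (R : realType) (mu nu : {measure set R -> \bar R})
  : {measure set R -> \bar R} :=
  mscale (beta_mass mu nu)
    (\d_((moment1 nu - moment1 mu) / (mass nu - mass mu)) : {measure set R -> \bar R}).

(* Main.v *)
Set Warnings "-notation-overridden,-ambiguous-paths,-notation-incompatible-prefix".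
Require Import Defs.
From HB Require Import structures.
From mathcomp Require Import all_boot all_order all_algebra.
From mathcomp Require Import all_classical all_reals all_analysis.
From mathcomp Require Import measurable_realfun ring lra.
Import Order.TTheory GRing.Theory Num.Theory.
Local Open Scope classical_set_scope.
Local Open Scope ring_scope.

Lemma mk01 (R : realType) (t : R) : 0 <= t -> t <= 1 -> {t' : {i01 R} | t'%:num = t}.
Proof.
move=> t0 t1.
have P : Itv.num_sem `[0%Z, 1%Z] t.
  by rewrite /Itv.num_sem /= in_itv /= t0 t1 (ger0_real t0).
by exists (@Itv.mk _ (@Itv.num_sem R) (Itv.Real `[0%Z,1%Z]) t P).
Qed.

Lemma convexRP (R : realType) (f : R -> R) : convexR f ->
  forall x y t, 0 <= t -> t <= 1 -> f (t * x + (1 - t) * y) <= t * f x + (1 - t) * f y.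
Proof.
move=> cf x y t t0 t1; have [t' <-] := @mk01 R t t0 t1.
have := cf t' x y; rewrite !inE => /(_ I I).
done.
Qed.
Arguments convexRP {R f}.

Lemma three_slope (R : realType) (f : R -> R) : convexR f ->
  forall x c y, x < c -> c < y -> (y - x) * f c <= (y - c) * f x + (c - x) * f y.
Proof.
move=> cf x c y xc cy.
have yx : 0 < y - x by lra.
set t := (y - c) / (y - x).
have t0 : 0 <= t by rewrite divr_ge0 //; lra.
have t1 : t <= 1 by rewrite ler_pdivrMr //; lra.
have ht : t * x + (1 - t) * y = c.
  rewrite /t; field; lra.
have := convexRP cf x y t t0 t1; rewrite ht => h.
have e1 : (y - c) = t * (y - x) by rewrite /t mulfVK //; lra.
have e2 : (c - x) = (1 - t) * (y - x) by rewrite /t; field; lra.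
rewrite e1 e2; nra.
Qed.
Arguments three_slope {R f} _ {x c y}.

Lemma slope_le (R : realType) (f : R -> R) : convexR f ->
  forall x c y, x < c -> c < y -> (f c - f x) / (c - x) <= (f y - f c) / (y - c).
Proof.
move=> cf x c y xc cy; have := three_slope cf xc cy => h.
rewrite ler_pdivrMr; last lra.
rewrite mulrAC ler_pdivlMr; last lra.
nra.
Qed.
Arguments slope_le {R f} _ {x c y}.

Lemma supp_line (R : realType) (f : R -> R) : convexR f ->
  forall c, exists s, forall x, f c + s * (x - c) <= f x.
Proof.
move=> cf c.
pose S := [set (f c - f x) / (c - x) | x in [set x | x < c]].
have S0 : S !=set0 by exists ((f c - f (c - 1)) / (c - (c - 1))), (c - 1) => //=; lra.
have Sub : forall y, c < y -> ubound S ((f y - f c) / (y - c)).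
  by move=> y cy _ [x /= xc <-]; exact: slope_le.
exists (sup S) => x.
have [xc|xc|->] := ltgtP x c; last by rewrite subrr mulr0 addr0.
- have : (f c - f x) / (c - x) <= sup S.
    apply: sup_upper_bound; last by exists x.
    by split => //; exists ((f (c + 1) - f c) / (c + 1 - c)); apply: Sub; lra.
  rewrite ler_pdivrMr; last lra.
  nra.
- have : sup S <= (f x - f c) / (x - c) by apply: ge_sup => //; exact: Sub.
  rewrite ler_pdivlMr; last lra.
  nra.
Qed.

Lemma gmono (R : realType) (f : R -> R) (s : R) : convexR f ->
  (forall x, f 0 + s * (x - 0) <= f x) ->
  forall y l, 0 <= l -> l <= 1 ->
   f (l * y) - (f 0 + s * (l * y)) <= f y - (f 0 + s * y).
Proof.
move=> cf hs y l l0 l1.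
have := convexRP cf 0 y (1 - l); rewrite subKr mulr0 add0r => /(_ _ _).
have h1 : 0 <= 1 - l by lra.
have h2 : 1 - l <= 1 by lra.
move=> /(_ h1 h2) h.
have := hs y; rewrite subr0 => hy.
nra.
Qed.

Lemma convex_measurable (R : realType) (f : R -> R) : convexR f ->
  measurable_fun setT f.
Proof.
move=> cf; have [s hs] := @supp_line R f cf 0.
pose g x := f x - (f 0 + s * x).
have g0 : g 0 = 0 by rewrite /g mulr0 addr0 subrr.
have gge0 x : 0 <= g x by have := hs x; rewrite /g subr0; lra.
have gm y l : 0 <= l -> l <= 1 -> g (l * y) <= g y by exact: gmono.
have -> : f = (fun x => (g (if 0 <= x then x else 0) + g (if x <= 0 then x else 0)) + (f 0 + s * x)).
  apply/funext => x; case: ifPn => h1; case: ifPn => h2.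
  - have e : x = 0 by lra.
    by rewrite e /g; ring.
  - by rewrite /g; ring.
  - by rewrite /g; ring.
  - rewrite -ltNge in h1; rewrite -ltNge in h2; lra.
apply: measurable_funD; last first.
  apply: measurable_funD; first exact: measurable_cst.
  apply: measurable_funM; [exact: measurable_cst | exact: measurable_id].
apply: measurable_funD.
  apply: nondecreasing_measurable => // a b ab.
  have [b0|b0] := leP 0 b; last first.
    have [a0|a0] := leP 0 a; last by [].
    by have := le_lt_trans a0 (le_lt_trans ab b0); rewrite ltxx.
  have [a0|a0] := leP 0 a; last by rewrite g0.
  have [e|bp] := eqVneq b 0.
    have ea : a = 0 by apply/eqP; rewrite eq_le a0 andbT; move: ab; rewrite e.
    by rewrite ea e.
  have bp' : 0 < b by rewrite lt_neqAle eq_sym bp b0.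
  have -> : a = (a / b) * b by rewrite mulfVK.
  apply: gm; first by rewrite divr_ge0.
  by rewrite ler_pdivrMr // mul1r.
apply: nonincreasing_measurable => // a b ab.
have [a0|a0] := leP a 0; last first.
  have [b0|b0] := leP b 0; last by [].
  by have := lt_le_trans a0 (le_trans ab b0); rewrite ltxx.
have [b0|b0] := leP b 0; last by rewrite g0.
have [e|ap] := eqVneq a 0.
  have eb : b = 0 by apply/eqP; rewrite eq_le b0 /=; move: ab; rewrite e.
  by rewrite eb e.
have ap' : a < 0 by rewrite lt_neqAle ap a0.
have -> : b = (b / a) * a by rewrite mulfVK.
apply: gm.
  by rewrite -mulrNN -invrN divr_ge0 // oppr_ge0 // ltW.
by rewrite ler_ndivrMr // mul1r.
Qed.

Lemma int_pinfty (R : realType) (mu : {measure set R -> \bar R}) (f l : R -> R) :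
  measurable_fun setT f -> mu.-integrable setT (EFin \o l) ->
  (forall x, l x <= f x) -> ~ mu.-integrable setT (EFin \o f) ->
  (\int[mu]_x (f x)%:E = +oo)%E.
Proof.
move=> mf il lf nif.
have mf' : measurable_fun setT (EFin \o f) by exact/measurable_EFinP.
have hneg : (\int[mu]_x ((EFin \o f)^\- x) < +oo)%E.
  apply: (le_lt_trans _ (integral_funeneg_lt_pinfty measurableT il)).
  apply: ge0_le_integral => //.
  - exact: measurable_funeneg.
  - apply: measurable_funeneg; exact: (measurable_int mu il).
  - move=> x _; apply: (funeneg_le (D := setT)); last by rewrite in_setT.
    by move=> y _ /=; rewrite lee_fin.
have bf : (\int[mu]_x ((EFin \o f)^\- x))%E \is a fin_num.
  by rewrite ge0_fin_numE // integral_ge0 // => x _; exact: funeneg_ge0.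
have habs : (\int[mu]_x `|(f x)%:E| = +oo)%E.
  apply/eqP; rewrite eq_le leey /= leNgt; apply/negP => h.
  by apply: nif; apply/integrableP; split.
have hpos : (\int[mu]_x ((EFin \o f)^\+ x) = +oo)%E.
  move: habs; rewrite (_ : (fun x => `|(f x)%:E|) = (EFin \o f)^\+ \+ (EFin \o f)^\-)%E; last first.
    by rewrite -fune_abse.
  rewrite /= (ge0_integralD mu measurableT (fun x _ => funepos_ge0 _ x) (measurable_funepos mf') (fun x _ => funeneg_ge0 _ x) (measurable_funeneg mf')).
  rewrite -(fineK bf); case: (\int[mu]_x ((EFin \o f)^\+ x))%E => //.
rewrite integralE /= hpos -(fineK bf) //.
Qed.

Section aff.
Local Open Scope ereal_scope.
Variable R : realType.
Variable mu : {finite_measure set R -> \bar R}.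
Hypothesis hmu : mu.-integrable setT (fun x => x%:E).

Lemma massE : mu setT = (mass mu)%:E.
Proof. by rewrite /mass fineK // fin_num_measure. Qed.

Lemma moment1E : \int[mu]_x x%:E = (moment1 mu)%:E.
Proof. by rewrite /moment1 fineK // integrable_fin_num. Qed.

Lemma aff_eq (a s : R) :
  (fun x => (a + s * x)%R%:E) = (EFin \o cst a) \+ (fun x => s%:E * x%:E).
Proof. by apply/funext => x /=; rewrite EFinD EFinM. Qed.

Lemma aff_int (a s : R) : mu.-integrable setT (fun x => (a + s * x)%R%:E).
Proof.
rewrite aff_eq; apply: integrableD => //.
  exact: finite_measure_integrable_cst.
exact: integrableZl.
Qed.

Lemma aff_integral (a s : R) :
  \int[mu]_x (a + s * x)%R%:E = (a * mass mu + s * moment1 mu)%R%:E.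
Proof.
rewrite aff_eq /= integralD //; last first.
- exact: integrableZl.
- exact: finite_measure_integrable_cst.
rewrite integralZl // integral_cst //.
rewrite /mass /moment1 EFinD !EFinM fineK; last exact: fin_num_measure.
rewrite fineK //; exact: integrable_fin_num.
Qed.
End aff.

Lemma mul_max_pos (R : realType) (k a : R) :
  k * Num.max a 0 - k * Num.max (- a) 0 = k * a.
Proof.
have [h|h] := leP 0 a.
  have -> : Num.max (- a) 0 = 0 by apply/max_idPr; rewrite oppr_le0.
  by rewrite mulr0 subr0.
have -> : Num.max (- a) 0 = - a by apply/max_idPl; rewrite oppr_ge0 ltW.
by rewrite mulr0 sub0r mulrN opprK.
Qed.

Lemma beta_integral (R : realType) (mu nu : {measure set R -> \bar R}) (f : R -> R) :
  measurable_fun setT f ->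
  (\int[beta mu nu]_x (f x)%:E =
   ((beta_mass mu nu)%:num * f ((moment1 nu - moment1 mu) / (mass nu - mass mu)))%:E)%E.
Proof.
move=> mf.
have mf' : measurable_fun setT (EFin \o f) by exact/measurable_EFinP.
rewrite integralE /beta.
rewrite ge0_integral_mscale //; last exact: measurable_funepos.
rewrite ge0_integral_mscale //; last exact: measurable_funeneg.
rewrite !integral_dirac //; [|exact: measurable_funeneg|exact: measurable_funepos].
rewrite diracT !mul1e.
set c := ((moment1 nu - moment1 mu) / (mass nu - mass mu))%R.
rewrite funeposE funenegE /=.
rewrite (_ : maxe (f c)%:E 0 = (Num.max (f c) 0)%:E)%E; last by rewrite EFin_max.
rewrite (_ : maxe (- f c)%:E 0 = (Num.max (- f c) 0)%:E)%E; last by rewrite EFin_max.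
rewrite -!EFinM -EFinB; congr EFin.
exact: mul_max_pos.
Qed.

Lemma convexR_intro (R : realType) (h : R -> R) :
  (forall x y t, 0 <= t -> t <= 1 -> h (t * x + (1 - t) * y) <= t * h x + (1 - t) * h y) ->
  convexR h.
Proof.
move=> H t x y _ _.
have t0 : 0 <= t%:num by case: t => v /= /andP[_]; rewrite in_itv /= => /andP[].
have t1 : t%:num <= 1 by clear t0; case: t => v /= /andP[_]; rewrite in_itv /= => /andP[].
rewrite convRE; exact: (H x y t%:num t0 t1).
Qed.

Lemma convex_subaff (R : realType) (f : R -> R) (a s : R) :
  convexR f -> convexR (fun x => f x - (a + s * x)).
Proof.
move=> cf; apply: convexR_intro => x y t t0 t1.
have H : forall (u v w : R), u <= v -> u - w <= v - w by move=> u v w uv; lra.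
have e : t * (f x - (a + s * x)) + (1 - t) * (f y - (a + s * y)) =
  (t * f x + (1 - t) * f y) - (a + s * (t * x + (1 - t) * y)) by ring.
rewrite e; apply: H.
have := convexRP cf x y t t0 t1; done.
Qed.

Lemma convex_put (R : realType) (k : R) : convexR (fun x => Num.max (k - x) 0).
Proof.
apply: convexR_intro => x y t t0 t1.
have hx : k - x <= Num.max (k - x) 0 by rewrite le_max lexx.
have hy : k - y <= Num.max (k - y) 0 by rewrite le_max lexx.
have hx0 : 0 <= Num.max (k - x) 0 by rewrite le_max lexx orbT.
have hy0 : 0 <= Num.max (k - y) 0 by rewrite le_max lexx orbT.
rewrite ge_max; apply/andP; split; last first.
  by apply: addr_ge0; apply: mulr_ge0 => //; lra.
have t1' : 0 <= 1 - t by lra.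
nra.
Qed.

Arguments convex_measurable {R f}.
Arguments supp_line {R f}.
Arguments convex_subaff {R f}.
Arguments int_pinfty {R mu f l}.
Arguments aff_int {R mu}.
Arguments aff_integral {R mu}.
Arguments beta_integral {R mu nu f}.
Arguments convex_put {R}.

Lemma convex_put2 (R : realType) (p q : R) : convexR (fun x => Num.max (p + q * x) 0).
Proof.
apply: convexR_intro => x y t t0 t1.
have hx : p + q * x <= Num.max (p + q * x) 0 by rewrite le_max lexx.
have hy : p + q * y <= Num.max (p + q * y) 0 by rewrite le_max lexx.
have hx0 : 0 <= Num.max (p + q * x) 0 by rewrite le_max lexx orbT.
have hy0 : 0 <= Num.max (p + q * y) 0 by rewrite le_max lexx orbT.
rewrite ge_max; apply/andP; split; last first.
  by apply: addr_ge0; apply: mulr_ge0 => //; lra.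
have t1' : 0 <= 1 - t by lra.
nra.
Qed.

Lemma psi_le (R : realType) (n : nat) (s x : R) : `|s| <= 1 ->
  `|Num.max (- n%:R + s * x) 0| <= `|x|.
Proof.
move=> hs.
have h1 : s * x <= `|x|.
  apply: le_trans (ler_norm _) _; rewrite normrM.
  by rewrite -[X in _ <= X]mul1r ler_wpM2r.
have n0 : 0 <= n%:R :> R by [].
rewrite ger0_norm; last by rewrite le_max lexx orbT.
rewrite ge_max normr_ge0 andbT; lra.
Qed.

Lemma psi_cvg0 (R : realType) (eta : {finite_measure set R -> \bar R})
  (heta : eta.-integrable setT (fun x => x%:E)) (s : R) : `|s| <= 1 ->
  ((fun n : nat => \int[eta]_x (Num.max (- n%:R + s * x) 0)%:E) @ \oo --> 0)%E.
Proof.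
move=> hs.
have ig : eta.-integrable setT (fun x => `|x|%:E).
  apply: (@eq_integrable _ _ _ eta setT measurableT (abse \o (fun x => x%:E))%E); last exact: integrable_abse heta.
  by move=> x _.
have := @dominated_convergence _ _ R eta setT measurableT
  (fun n x => (Num.max (- n%:R + s * x) 0)%:E) (cst 0%E) (fun x => `|x|%:E).
case.
- move=> n; apply/measurable_EFinP; have := convex_measurable (@convex_put2 R (- n%:R) s); exact.
- exact: measurable_cst.
- apply: aeW => x _; apply: cvg_near_cst.
  exists (Num.truncn (s * x)).+1 => // n /= hn.
  have h1 := truncnS_gt (s * x).
  have h2 : ((Num.truncn (s * x)).+1%:R <= n%:R :> R) by rewrite ler_nat.
  have -> : Num.max (- n%:R + s * x) 0 = 0 by apply/max_idPr; lra.
  by [].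
- exact: ig.
- apply: aeW => x n _ /=; rewrite lee_fin; exact: psi_le.
- by move=> _ _; rewrite integral0.
Qed.

Lemma max_split (R : realType) (u : R) : Num.max u 0 = u + Num.max (- u) 0.
Proof.
have [h|h] := leP 0 u.
  have -> : Num.max (- u) 0 = 0 by apply/max_idPr; rewrite oppr_le0.
  by rewrite addr0.
have -> : Num.max (- u) 0 = - u by apply/max_idPl; rewrite oppr_ge0 ltW.
by rewrite subrr.
Qed.

Lemma max_ge0r (R : realType) (a : R) : 0 <= Num.max a 0.
Proof. by rewrite le_max lexx orbT. Qed.

Lemma mass_le (R : realType) (mu nu : {finite_measure set R -> \bar R}) :
  le_E mu nu -> mass mu <= mass nu.
Proof.
move=> hE.
have c1 : convexR (fun _ : R => (1 : R)).
  by apply: convexR_intro => x y t _ _; rewrite !mulr1 subrKC.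
have := hE (fun _ => 1) c1 (fun _ => ler01).
rewrite !integral_cst //= !mul1e /mass => h.
rewrite -lee_fin !fineK //; exact: fin_num_measure.
Qed.

Section main.
Variable R : realType.
Variables mu nu : {finite_measure set R -> \bar R}.
Hypothesis hmu : mu.-integrable setT (fun x => x%:E).
Hypothesis hnu : nu.-integrable setT (fun x => x%:E).
Hypothesis hE : le_E mu nu.

Lemma mean_le (sg : R) : `|sg| <= 1 -> mass nu = mass mu ->
  sg * (moment1 mu - moment1 nu) <= 0.
Proof.
move=> hsg hM.
have ig : forall eta : {finite_measure set R -> \bar R},
    eta.-integrable setT (fun x => x%:E) -> forall n : nat,
    eta.-integrable setT (fun x => (Num.max (- n%:R + (- sg) * x) 0)%:E).
  move=> eta heta n.
  have iga : eta.-integrable setT (fun x => `|x|%:E).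
    apply: (@eq_integrable _ _ _ eta setT measurableT (abse \o (fun x => x%:E))%E); last exact: integrable_abse heta.
    by move=> x _.
  apply: (le_integrable measurableT _ _ iga).
    by apply/measurable_EFinP; have := convex_measurable (@convex_put2 R (- n%:R) (- sg)); exact.
  move=> x _ /=; rewrite !lee_fin /= normr_id; apply: psi_le; by rewrite normrN.
have H : forall n : nat, ((sg * (moment1 mu - moment1 nu))%:E <=
    \int[nu]_x (Num.max (- n%:R + (- sg) * x) 0)%:E)%E.
  move=> n.
  have hphi := hE _ (@convex_put2 R n%:R sg) (fun x => max_ge0r _ _).
  have phiE : (fun x => (Num.max (n%:R + sg * x) 0)%:E) =
     ((fun x => (n%:R + sg * x)%:E) \+ (fun x => (Num.max (- n%:R + (- sg) * x) 0)%:E))%E.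
    by apply/funext => x /=; rewrite max_split -EFinD opprD mulNr.
  move: hphi; rewrite phiE /=.
  rewrite (integralD measurableT (aff_int hmu _ _) (ig _ hmu n)).
  rewrite (integralD measurableT (aff_int hnu _ _) (ig _ hnu n)).
  rewrite !aff_integral // hM.
  rewrite -(fineK (integrable_fin_num measurableT (ig _ hmu n))) -(fineK (integrable_fin_num measurableT (ig _ hnu n))).
  rewrite -!EFinD !lee_fin => h.
  have : 0 <= fine (\int[mu]_x (Num.max (- n%:R + (- sg) * x) 0)%:E)%E.
    apply: fine_ge0; apply: integral_ge0 => x _; rewrite lee_fin; exact: max_ge0r _ _.
  lra.
have hsg' : `|- sg| <= 1 by rewrite normrN.
have cv := @psi_cvg0 R nu hnu (- sg) hsg'.
have : ((sg * (moment1 mu - moment1 nu))%:E <= 0)%E.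
  rewrite -(cvg_lim _ cv) //; apply: lime_ge; first by apply/cvg_ex; exists 0%E.
  by apply: nearW.
by rewrite lee_fin.
Qed.

Lemma mean_eq : mass nu = mass mu -> moment1 nu = moment1 mu.
Proof.
move=> hM.
have h1r : `|1 : R| <= 1 by rewrite normr1.
have h1 := @mean_le 1 h1r hM.
have hm1 : `|-1 : R| <= 1 by rewrite normrN normr1.
have h2 := @mean_le (-1) hm1 hM.
lra.
Qed.

Let m := mass nu - mass mu.
Let c := (moment1 nu - moment1 mu) / (mass nu - mass mu).

Lemma m_ge0 : 0 <= m.
Proof. by rewrite /m subr_ge0; exact: mass_le. Qed.

Lemma bm_eq : (beta_mass mu nu)%:num = m.
Proof. by rewrite /= /m; apply/max_idPr; exact: m_ge0. Qed.

Lemma cm_eq : c * m = moment1 nu - moment1 mu.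
Proof.
rewrite /c /m; have [e|ne] := eqVneq (mass nu - mass mu) 0.
  rewrite e mulr0; move/eqP: e; rewrite subr_eq0 => /eqP/mean_eq ->.
  by rewrite subrr.
by rewrite mulfVK.
Qed.

Lemma part1 (f : R -> R) : convexR f ->
  (\int[beta mu nu]_x (f x)%:E + \int[mu]_x (f x)%:E <= \int[nu]_x (f x)%:E)%E.
Proof.
move=> cf; have mf := convex_measurable cf.
have [s hs] := supp_line cf c.
set a := f c - s * c.
have hl : forall x, a + s * x <= f x by move=> x; have := hs x; rewrite /a; lra.
pose g x := f x - (a + s * x).
have cg : convexR g by exact: convex_subaff a s cf.
have g0 : forall x, 0 <= g x by move=> x; rewrite /g subr_ge0.
have hg := hE g cg g0.
rewrite beta_integral // bm_eq.
case: (pselect (nu.-integrable setT (EFin \o f))) => [inf|ninf]; last first.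
  by rewrite (int_pinfty mf (aff_int hnu a s) hl ninf) leey.
have mg : measurable_fun setT g := convex_measurable cg.
have gE : (fun x => (g x)%:E) = ((EFin \o f) \- (fun x => (a + s * x)%:E))%E.
  by apply/funext => x /=; rewrite /g EFinB.
have fE : (fun x => (f x)%:E) = ((fun x => (g x)%:E) \+ (fun x => (a + s * x)%:E))%E.
  by apply/funext => x /=; rewrite /g -EFinD subrK.
have ign : nu.-integrable setT (fun x => (g x)%:E).
  by rewrite gE; apply: integrableB => //; exact: aff_int.
have igm : mu.-integrable setT (fun x => (g x)%:E).
  apply/integrableP; split; first exact/measurable_EFinP.
  under eq_integral do rewrite gee0_abs ?lee_fin //.
  exact: (le_lt_trans hg (integrable_lty measurableT ign)).
rewrite fE /= (integralD measurableT igm (aff_int hmu a s)).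
rewrite (integralD measurableT ign (aff_int hnu a s)).
rewrite !aff_integral //.
move: hg.
rewrite -(fineK (integrable_fin_num measurableT igm)) -(fineK (integrable_fin_num measurableT ign)).
rewrite !lee_fin => hg.
have hcm := cm_eq.
have key : m * f c + (a * mass mu + s * moment1 mu) = a * mass nu + s * moment1 nu.
  have -> : a * mass nu + s * moment1 nu = a * mass nu + s * moment1 mu + s * (moment1 nu - moment1 mu) by ring.
  rewrite -hcm /a /m; ring.
lra.
Qed.

Lemma part3 (k : R) : Pput (beta mu nu) k =
  (Num.max ((mass nu - mass mu) * k - (moment1 nu - moment1 mu)) 0)%:E.
Proof.
rewrite /Pput (beta_integral (convex_measurable (convex_put k))) bm_eq.
congr EFin; rewrite maxr_pMr ?m_ge0 // mulr0; congr (Num.max _ 0).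
have := cm_eq; rewrite /m /c => h.
by rewrite mulrBr [X in _ - X]mulrC h.
Qed.

End main.

Theorem corollary3p6 (R : realType)
  (mu nu : {finite_measure set R -> \bar R})
  (hmu : mu.-integrable setT (fun x => x%:E))
  (hnu : nu.-integrable setT (fun x => x%:E))
  (hE : le_E mu nu) :
  (forall f : R -> R, convexR f ->
     (\int[beta mu nu]_x (f x)%:E + \int[mu]_x (f x)%:E
        <= \int[nu]_x (f x)%:E)%E)
  /\ (forall k : R, (Pput (beta mu nu) k + Pput mu k <= Pput nu k)%E)
  /\ (forall k : R, Pput (beta mu nu) k =
        (Num.max ((mass nu - mass mu) * k - (moment1 nu - moment1 mu)) 0)%:E).
Proof.
split; first exact: part1.
split => k; last exact: part3.
rewrite /Pput; exact: part1 (convex_put k).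
Qed.
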